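(* Let $r(n)$ be the Golay–Rudin–Shapiro sequence defined by $r(0)=1$, $r(2n)=r(n)$, $r(2n+1)=(-1)^n r(n)$. Then in the ring of formal power series $\mathbb{Z}[[z]]$, $$\sum_{k\ge 0}(-1)^k z^{2^k-1}=\cfrac{1}{1+\cfrac{r(0)r(2)z}{1+\cfrac{r(1)r(3)z}{1+\cfrac{r(2)r(4)z}{1+\cdots}}}}.$$
   Context: The infinite continued fraction $\frac{1}{1+\frac{c_0z}{1+\frac{c_1z}{1+\cdots}}}$ with $c_n=r(n)r(n+2)\in\{\pm1\}$ is understood as the formal power series limit of its finite truncations (the $N$-th truncation agrees with the limit up to order $z^N$). Explicitly the right-hand side is $\frac{1}{1+\frac{z}{1-\frac{z}{1+\frac{z}{1-\cdots}}}}$ at the start. *)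

(* Defs.v *)
From mathcomp Require Import all_boot all_order all_algebra.
Set Implicit Arguments. Unset Strict Implicit. Unset Printing Implicit Defensive.
Import Order.TTheory GRing.Theory Num.Theory.
Local Open Scope ring_scope.

(* A formal power series in Z[[z]]: its coefficient sequence. *)
Definition ps := nat -> int.

Definition ps_one : ps := fun n => if n == 0%N then 1 else 0.
Definition ps_add (f g : ps) : ps := fun n => f n + g n.
Definition ps_scale (c : int) (f : ps) : ps := fun n => c * f n.
Definition ps_mulz (f : ps) : ps := fun n => if n is m.+1 then f m else 0.
Definition ps_mul (f g : ps) : ps :=
  fun n => \sum_(i < n.+1) f i * g (n - i)%N.

Fixpoint ps_inv_seq (f : ps) (n : nat) : seq int :=
  match n with
  | 0 => [:: 1]
  | n'.+1 => let s := ps_inv_seq f n' in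
             rcons s (- \sum_(j < n'.+1) f j.+1 * nth 0 s (n' - j)%N)
  end.

(* Multiplicative inverse in Z[[z]] of a series with constant term 1
   (only ever applied to such series below). *)
Definition ps_inv (f : ps) : ps := fun n => nth 0 (ps_inv_seq f n) n.

(* N-th truncation of the continued fraction
     1/(1 + c_m z/(1 + c_{m+1} z/(1 + ... /(1 + c_{m+N-1} z))))
   with cf_trunc c m 0 = 1. *)
Fixpoint cf_trunc (c : nat -> int) (m N : nat) : ps :=
  match N with
  | 0 => ps_one
  | N'.+1 => ps_inv (ps_add ps_one (ps_scale (c m) (ps_mulz (cf_trunc c m.+1 N'))))
  end.

(* Coefficients of sum_{k>=0} (-1)^k z^(2^k - 1); only k <= n can contribute
   to the coefficient of z^n since 2^k - 1 >= k. *)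
Definition lhs_series : ps :=
  fun n => \sum_(k < n.+1) (if (2 ^ k - 1)%N == n then (-1) ^+ k else 0).

(* Main.v *)
Require Import Defs.
From mathcomp Require Import all_boot all_order all_algebra.
From mathcomp Require Import ring zify.
Import GRing.Theory.
Local Open Scope ring_scope.

Set Implicit Arguments. Unset Strict Implicit.

Implicit Types p q s h : {poly int}.
Definition eqm (K : nat) (p q : {poly int}) := exists h : {poly int}, p - q = 'X^K * h.

Lemma eqm_coef K p q : (forall i, (i < K)%N -> p`_i = q`_i) -> eqm K p q.
Proof.
move=> H; exists (drop_poly K (p - q)).
have Ht : take_poly K (p - q) = 0.
  apply/polyP => i; rewrite coef_take_poly coef0 coefB.
  by case: ifP => // /H ->; rewrite subrr.
by rewrite -{1}(poly_take_drop K (p - q)) Ht add0r mulrC.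
Qed.

Lemma eqm_coefE K p q : eqm K p q -> forall i, (i < K)%N -> p`_i = q`_i.
Proof.
move=> [h E] i Hi; apply/eqP; rewrite -subr_eq0 -coefB E coefXnM Hi //.
Qed.

Lemma eqm_eq K p q : p = q -> eqm K p q.
Proof. by move=> ->; exists 0; rewrite subrr mulr0. Qed.

Lemma eqm_sym K p q : eqm K p q -> eqm K q p.
Proof. by move=> [h E]; exists (- h); rewrite mulrN -E opprB. Qed.

Lemma eqm_trans K p q s : eqm K p q -> eqm K q s -> eqm K p s.
Proof.
move=> [h E] [h' E']; exists (h + h'); rewrite mulrDr -E -E'.
by rewrite addrA subrK.
Qed.

Lemma eqmD K p q p' q' : eqm K p q -> eqm K p' q' -> eqm K (p + p') (q + q').
Proof.
move=> [h E] [h' E']; exists (h + h'); rewrite mulrDr -E -E'; ring.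
Qed.

Lemma eqmM K p q p' q' : eqm K p q -> eqm K p' q' -> eqm K (p * p') (q * q').
Proof.
move=> [h E] [h' E']; exists (h * p' + q * h').
have -> : p * p' - q * q' = (p - q) * p' + q * (p' - q') by ring.
rewrite E E'; ring.
Qed.

Lemma eqm_le K K' p q : (K <= K')%N -> eqm K' p q -> eqm K p q.
Proof.
move=> H [h E]; exists ('X^(K' - K) * h).
by rewrite E mulrA -exprD subnKC.
Qed.

Lemma eqmX K p q : eqm K p q -> eqm K.+1 ('X * p) ('X * q).
Proof.
move=> [h E]; exists h; rewrite -mulrBr E exprS mulrA //.
Qed.

Lemma eqm_comp K p q : eqm K p q -> eqm K (p \Po 'X^2) (q \Po 'X^2).
Proof.
move=> [h E]; exists ('X^K * (h \Po 'X^2)).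
rewrite -comp_polyB E comp_polyM comp_Xn_poly -exprM mulnC muln2 -addnn exprD.
by rewrite -!mulrA.
Qed.

Lemma eqm_inv K p q q' : eqm K (p * q) 1 -> eqm K (p * q') 1 -> eqm K q q'.
Proof.
move=> [h1 H1] [h2 H2]; exists (q' * h1 - q * h2).
have -> : q - q' = q' * (p * q - 1) - q * (p * q' - 1) by ring.
rewrite H1 H2; ring.
Qed.


Definition tau (L : nat) (f : ps) : {poly int} := \poly_(i < L) f i.

Lemma tau_onep L x g :
  eqm L (tau L (ps_add ps_one (ps_scale x (ps_mulz g)))) (1 + x%:P * 'X * tau L g).
Proof.
apply: eqm_coef => i Hi.
rewrite coefD coef1 -mulrA coefCM coefXM /tau !coef_poly Hi /ps_add /ps_one /ps_scale /ps_mulz.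
case: i Hi => [|i] Hi /=; first by rewrite mulr0.
by rewrite (ltnW Hi) add0r.
Qed.

Lemma onep0 x g : (ps_add ps_one (ps_scale x (ps_mulz g))) 0%N = 1.
Proof. by rewrite /ps_add /ps_one /ps_scale /ps_mulz /= mulr0 addr0. Qed.

Lemma inv_prefix f n k : (k <= n)%N -> nth 0 (ps_inv_seq f n) k = ps_inv f k.
Proof.
elim: n k => [|n IH] k Hk.
  by move: Hk; rewrite leqn0 => /eqP ->.
have Hs : forall m, size (ps_inv_seq f m) = m.+1.
  by elim=> [|m IHm] //=; rewrite size_rcons IHm.
rewrite /= nth_rcons Hs.
case: ltnP => Hk'; first by apply: IH.
have -> : k = n.+1 by apply/eqP; rewrite eqn_leq Hk Hk'.
by rewrite /ps_inv /= nth_rcons Hs ltnn eqxx.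
Qed.

Lemma inv_rec f n : ps_inv f n.+1 = - \sum_(j < n.+1) f j.+1 * ps_inv f (n - j)%N.
Proof.
have Hs : forall m, size (ps_inv_seq f m) = m.+1.
  by elim=> [|m IHm] //=; rewrite size_rcons IHm.
rewrite {1}/ps_inv /= nth_rcons Hs ltnn eqxx; congr (- _).
by apply: eq_bigr => j _; rewrite inv_prefix // leq_subr.
Qed.

Lemma tau_inv L f : f 0%N = 1 -> eqm L (tau L f * tau L (ps_inv f)) 1.
Proof.
move=> f0; apply: eqm_coef => i Hi.
rewrite coefM coef1.
under eq_bigr => j _ do rewrite /tau !coef_poly (leq_ltn_trans (ltnSE (ltn_ord j)) Hi)
   (leq_ltn_trans (leq_subr _ _) Hi).
case: i Hi => [|i] Hi.
  by rewrite big_ord1 f0 mul1r.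
rewrite big_ord_recl /= f0 mul1r subn0 inv_rec.
under [X in _ + X = _]eq_bigr => j _ do rewrite /bump /= add1n subSS.
by rewrite addNr.
Qed.

Lemma eqm_one K a : eqm K a 1 -> exists h, a = 1 + 'X^K * h.
Proof. by move=> [h /eqP]; rewrite subr_eq addrC => /eqP ->; exists h. Qed.

Lemma step_alg K L (A B : ps) (d d' : int) : (K.+2 <= L)%N ->
 eqm K (tau L A) (1 - d'%:P * 'X * (tau L B \Po 'X^2)) ->
 eqm K.+2 (tau L (ps_inv (ps_add ps_one (ps_scale d (ps_mulz (ps_inv (ps_add ps_one (ps_scale (-d) (ps_mulz A)))))))))
   (1 - d%:P * 'X * (tau L (ps_inv (ps_add ps_one (ps_scale (d*d') (ps_mulz B)))) \Po 'X^2)).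
Proof.
move=> HL IH.
set P1 := ps_add ps_one (ps_scale (-d) (ps_mulz A)).
set U := tau L (ps_inv P1).
set P2 := ps_add ps_one (ps_scale d (ps_mulz (ps_inv P1))).
set Q1 := ps_add ps_one (ps_scale (d*d') (ps_mulz B)).
set V := tau L (ps_inv Q1) \Po 'X^2.
set Y := tau L B \Po 'X^2.
set a0 := tau L A.
set W := tau L (ps_inv P2).
pose Pp := 1 + (-d)%:P * 'X * (1 - d'%:P * 'X * Y).
pose Qp := 1 + (d*d')%:P * 'X^2 * Y.
have hU : eqm K.+1 (Pp * U) 1.
  have h1 := tau_inv L (onep0 (-d) A).
  have h2 : eqm K.+1 (tau L P1) Pp.
    apply: eqm_trans (eqm_le _ (tau_onep L (-d) A)) _; first lia.
    apply: eqmD; first exact: eqm_eq.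
    have := eqmM (eqm_eq K.+1 (erefl (-d)%:P)) (eqmX IH).
    by rewrite !mulrA.
  apply: eqm_trans (eqmM (eqm_sym h2) (eqm_eq _ (erefl U))) _.
  apply: eqm_le h1; lia.
have hW : eqm K.+2 ((1 + d%:P * 'X * U) * W) 1.
  have h1 := tau_inv L (onep0 d (ps_inv P1)).
  have h2 := tau_onep L d (ps_inv P1).
  apply: eqm_le HL _.
  exact: eqm_trans (eqmM (eqm_sym h2) (eqm_eq _ (erefl W))) h1.
have hV : eqm K.+1 (Qp * V) 1.
  have h1 := tau_inv L (onep0 (d*d') B).
  have h2 := tau_onep L (d*d') B.
  have h3 := eqm_comp (eqm_trans (eqmM (eqm_sym h2) (eqm_eq _ (erefl (tau L (ps_inv Q1))))) h1).
  have e1 : (1:{poly int}) \Po 'X^2 = 1 by rewrite -polyC1 comp_polyC.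
  rewrite comp_polyM comp_polyD !comp_polyM e1 comp_polyC comp_polyX in h3.
  apply: eqm_le h3; lia.
apply: (eqm_inv hW).
pose E := d%:P * (U - V) - d%:P * d%:P * 'X * U * V.
have -> : (1 + d%:P * 'X * U) * (1 - d%:P * 'X * V) = 1 + 'X * E by rewrite /E; ring.
rewrite -[X in eqm _ _ X]addr0; apply: eqmD; first exact: eqm_eq.
rewrite -(mulr0 'X); apply: eqmX.
have [h1 e1] := eqm_one hU.
have [h2 e2] := eqm_one hV.
exists (- E * (h1 + h2 + 'X^(K.+1) * h1 * h2) +
   (d%:P * (h1 * Qp - h2 * Pp) - d%:P * d%:P * 'X * (h1 + h2 + 'X^(K.+1) * h1 * h2)) * (U * V)).
have -> : E - 0 = E * ((Pp * U) * (Qp * V)) - E * ((Pp * U) * (Qp * V) - 1) by ring.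
have -> : E * ((Pp * U) * (Qp * V)) =
  (d%:P * ((Pp * U) * Qp - (Qp * V) * Pp) - d%:P * d%:P * 'X * (Pp * U) * (Qp * V)) * (U * V)
  by rewrite /E; ring.
rewrite e1 e2 /Pp /Qp.
set Z := 'X^(K.+1).
ring.
Qed.


Lemma cf0 c m N : cf_trunc c m N 0%N = 1.
Proof. by case: N. Qed.

Section Main.
Variables (c d : nat -> int).
Hypothesis hc2 : forall n, c (2 * n)%N = d n.
Hypothesis hc21 : forall n, c (2 * n).+1 = - d n.
Hypothesis hcd : forall n, c n = d n * d n.+1.

Definition Qp K := forall n N M L, (K <= N)%N -> (K <= 2 * M + 1)%N -> (K <= L)%N ->
  eqm K (tau L (cf_trunc c (2 * n) N))
        (1 - (d n)%:P * 'X * (tau L (cf_trunc c n M) \Po 'X^2)).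

Lemma Qall K : Qp K.
Proof.
suff H : forall k, Qp k /\ Qp k.+1 by case: (H K).
clear K; elim=> [|K [IH0 IH1]].
  split=> n N M L hN hM hL.
    by exists (tau L (cf_trunc c (2 * n) N) - (1 - (d n)%:P * 'X * (tau L (cf_trunc c n M) \Po 'X^2))); rewrite expr0 mul1r.
  apply: eqm_coef => i; rewrite ltnS leqn0 => /eqP ->.
  rewrite coefB coef1 -mulrA coefCM coefXM /tau coef_poly hL cf0 /=.
  by rewrite mulr0 subr0.
split=> // n N M L hN hM hL.
case: N hN => [|[|a]] hN; first lia; first lia.
case: M hM => [|b] hM; first lia.
have E1 : cf_trunc c (2 * n) a.+2 = ps_inv (ps_add ps_one (ps_scale (c (2 * n)%N)
   (ps_mulz (ps_inv (ps_add ps_one (ps_scale (c (2 * n).+1)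
   (ps_mulz (cf_trunc c (2 * n).+2 a)))))))) := erefl.
have E2 : cf_trunc c n b.+1 = ps_inv (ps_add ps_one (ps_scale (c n)
   (ps_mulz (cf_trunc c n.+1 b)))) := erefl.
rewrite E1 E2 hc2 hc21 hcd.
apply: step_alg => //.
have -> : (2 * n).+2 = (2 * n.+1)%N by lia.
apply: IH0; lia.
Qed.

End Main.

Section R.
Variable r : nat -> int.
Hypothesis hr0 : r 0%N = 1.
Hypothesis hreven : forall n : nat, r (2 * n)%N = r n.
Hypothesis hrodd : forall n : nat, r (2 * n + 1)%N = (-1) ^+ n * r n.

Lemma sgn2 n : (-1) ^+ n * (-1) ^+ n = 1 :> int.
Proof. by rewrite -expr2 sqrr_sign. Qed.

Lemma rsq n : r n * r n = 1.
Proof.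
elim/ltn_ind: n => n IH.
case: n IH => [|n] IH; first by rewrite hr0 mulr1.
have [m [E|E]] : exists m, n.+1 = (2 * m)%N \/ n.+1 = (2 * m + 1)%N.
  exists (n.+1)./2; move: (odd_double_half n.+1); case: (odd n.+1) => /= H; [right|left]; lia.
  rewrite E hreven; apply: IH; lia.
rewrite E hrodd mulrACA sgn2 mul1r; apply: IH; lia.
Qed.

Definition dd n := r n * r n.+1.
Definition cc k := r k * r (k + 2)%N.

Lemma hc2r n : cc (2 * n)%N = dd n.
Proof.
rewrite /cc /dd hreven.
have -> : (2 * n + 2 = 2 * n.+1)%N by lia.
by rewrite hreven.
Qed.

Lemma hc21r n : cc (2 * n).+1 = - dd n.
Proof.
rewrite /cc /dd.
have -> : ((2 * n).+1 = 2 * n + 1)%N by lia.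
have -> : (2 * n + 1 + 2 = 2 * n.+1 + 1)%N by lia.
rewrite !hrodd exprS.
transitivity (- (((-1) ^+ n * (-1) ^+ n) * (r n * r n.+1))); first ring.
by rewrite sgn2 mul1r.
Qed.

Lemma hcdr n : cc n = dd n * dd n.+1.
Proof.
rewrite /cc /dd addn2.
by rewrite -mulrA (mulrA (r n.+1)) rsq mul1r.
Qed.

End R.


Definition tt n k : int := if (2 ^ k - 1 == n)%N then (-1) ^+ k else 0.

Lemma lhsB n e : lhs_series n = \sum_(k < n.+1 + e) tt n k.
Proof.
elim: e => [|e IH]; first by rewrite addn0.
rewrite addnS big_ord_recr /= -IH /tt.
have := ltn_expl (n.+1 + e) (isT : (1 < 2)%N).
case: eqP => [H|]; last by rewrite addr0.
lia.
Qed.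

Lemma lhs0 : lhs_series 0 = 1.
Proof. by rewrite /lhs_series big_ord1. Qed.

Lemma lhsS m : lhs_series m.+1 = - (if (2 %| m)%N then lhs_series (m %/ 2)%N else 0).
Proof.
rewrite {1}/lhs_series big_ord_recl /= /bump /= add0r.
have [j [E|E]] : exists j, m = (2 * j)%N \/ m = (2 * j + 1)%N.
  exists m./2; move: (odd_double_half m); case: (odd m) => /= H; [right|left]; lia.
- rewrite E dvdn_mulr // mulKn //.
  rewrite (lhsB j j) -sumrN.
  have -> : (j.+1 + j = (2 * j).+1)%N by lia.
  apply: eq_bigr => k _; rewrite /tt add1n expnS.
  have := expn_gt0 2 k; rewrite /= => hk.
  case: (boolP (2 ^ k - 1 == j)%N) => /eqP h1.
    have -> : (2 * 2 ^ k - 1 == (2 * j).+1)%N by apply/eqP; lia.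
    by rewrite exprS mulN1r.
  have -> : (2 * 2 ^ k - 1 == (2 * j).+1)%N = false by apply/eqP; lia.
  by rewrite oppr0.
- rewrite E.
  have -> : (2 %| 2 * j + 1)%N = false by rewrite dvdn2 oddD oddM.
  rewrite oppr0 big1 // => k _; rewrite /tt add1n expnS.
  have := expn_gt0 2 k; rewrite /= => hk.
  by have -> : (2 * 2 ^ k - 1 == (2 * j + 1).+1)%N = false by apply/eqP; lia.
Qed.

Unset Implicit Arguments.

Theorem corollary5p12 (r : nat -> int)
  (hr0 : r 0%N = 1)
  (hreven : forall n : nat, r (2 * n)%N = r n)
  (hrodd : forall n : nat, r (2 * n + 1)%N = (-1) ^+ n * r n) :
  forall N n : nat, (n < N)%N ->
    cf_trunc (fun k => r k * r (k + 2)%N) 0 N n = lhs_series n.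
Proof.
move=> N n; elim/ltn_ind: n => n IH hn.
have H1 : forall n, cc r (2 * n)%N = dd r n := hc2r hr0 hreven.
have H2 : forall n, cc r (2 * n).+1 = - dd r n := hc21r hr0 hrodd.
have H3 : forall n, cc r n = dd r n * dd r n.+1 := hcdr hr0 hreven hrodd.
have hQ : eqm n.+1 (tau N (cf_trunc (cc r) (2 * 0) N))
   (1 - (dd r 0)%:P * 'X * (tau N (cf_trunc (cc r) 0 N) \Po 'X^2)).
  by apply: (Qall H1 H2 H3 (K:=n.+1)) => //; lia.
have d0 : dd r 0 = 1.
  rewrite /dd hr0 mul1r.
  by have := hrodd 0; rewrite muln0 add0n expr0 mul1r hr0.
have := eqm_coefE hQ (ltnSn n).
rewrite /tau coef_poly hn muln0 => ->.
rewrite coefB coef1 -mulrA coefCM d0 mul1r coefXM.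
clear hQ; case: n IH hn => [|m] IH hn; first by rewrite lhs0 /= subr0.
rewrite /= sub0r lhsS coef_comp_poly_Xn //.
case: ifP => // hd.
rewrite coef_poly.
have hm : (m %/ 2 < m.+1)%N by rewrite ltnS leq_div.
have -> : (m %/ 2 < N)%N by apply: ltn_trans hm hn.
by rewrite IH // (ltn_trans hm hn).
Qed.
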